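(* Let $f:\mathbb{R}^n\to\mathbb{R}$ be continuously differentiable, let $s$ be a positive integer, and let $D$ be a diagonal matrix with $D\succ 0$. A point $x\in C_s$ is $D$-stationary if and only if, for every $i\in\{1,\dots,n\}$, $$|\nabla_i f(x)| = 0 \text{ if } i\in I_1(x),\qquad |\nabla_i f(x)|\le D_{ii}^{1/2}\,M_s(D^{1/2}x)\text{ if } i\in I_0(x).$$
   Context: $C_s=\{x\in\mathbb{R}^n:\|x\|_0\le s\}$, where $\|x\|_0$ is the number of nonzero entries of $x$. For $z\in\mathbb{R}^n$, $\mathcal{P}_{C_s}(z)=\operatorname{argmin}_{y\in C_s}\|y-z\|_2^2$ is the (set-valued) projection onto $C_s$, i.e. the set of vectors obtained by keeping $s$ entries of $z$ of largest absolute value and zeroing the rest. A point $x\in C_s$ is called $D$-stationary if $x\in D^{-1/2}\mathcal{P}_{C_s}\big(D^{1/2}x-D^{-1/2}\nabla f(x)\big)$. $I_1(x)=\{i: x_i\neq 0\}$ and $I_0(x)=\{i:x_i=0\}$. $M_s(z)$ denotes the $s$-th largest absolute value among the entries of $z$. *)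

(* Defs.v *)
From HB Require Import structures.
From mathcomp Require Import all_boot all_order all_algebra.
From mathcomp Require Import all_classical all_reals all_analysis.
Set Implicit Arguments. Unset Strict Implicit. Unset Printing Implicit Defensive.
Import Order.TTheory GRing.Theory Num.Theory.
Import numFieldNormedType.Exports.
Local Open Scope ring_scope.
Local Open Scope classical_set_scope.

Section Defs.
Variables (R : realType) (n : nat).

Definition l0norm (x : 'rV[R]_n) : nat := #|[set i : 'I_n | x 0 i != 0]|.

Definition Cs (s : nat) : set 'rV[R]_n := [set x | (l0norm x <= s)%N].

Definition sqnorm (x : 'rV[R]_n) : R := \sum_i (x 0 i) ^+ 2.

Definition projCs (s : nat) (z : 'rV[R]_n) : set 'rV[R]_n :=
  [set y | Cs s y /\ forall y', Cs s y' -> sqnorm (y - z) <= sqnorm (y' - z)].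

Definition unitv (i : 'I_n) : 'rV[R]_n := delta_mx 0 i.

Definition grad (f : 'rV[R]_n -> R) (x : 'rV[R]_n) : 'rV[R]_n :=
  \row_i ('D_(unitv i) f x).

Definition posdef (D : 'M[R]_n) : Prop :=
  forall v : 'rV[R]_n, v != 0 -> 0 < (v *m D *m v^T) 0 0.

Definition sqrtD (D : 'M[R]_n) : 'M[R]_n := diag_mx (\row_i Num.sqrt (D i i)).
Definition invsqrtD (D : 'M[R]_n) : 'M[R]_n :=
  diag_mx (\row_i (Num.sqrt (D i i))^-1).

Definition D_stationary (f : 'rV[R]_n -> R) (D : 'M[R]_n) (s : nat)
  (x : 'rV[R]_n) : Prop :=
  Cs s x /\
  exists2 y, projCs s (x *m sqrtD D - grad f x *m invsqrtD D) y
           & x = y *m invsqrtD D.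

(* M_s(z): s-th largest absolute value among entries of z (0 if s > n) *)
Definition Ms (s : nat) (z : 'rV[R]_n) : R :=
  nth 0 (sort (fun a b : R => b <= a) [seq `|z 0 i| | i <- enum 'I_n]) s.-1.

End Defs.

(* Main.v *)
Require Import Defs.
From HB Require Import structures.
From mathcomp Require Import all_boot all_order all_algebra.
From mathcomp Require Import all_classical all_reals all_analysis.
From mathcomp Require Import ring lra.
Import Order.TTheory GRing.Theory Num.Theory.
Import numFieldNormedType.Exports.
Local Open Scope ring_scope.
Section Ms.
Context {R : realType} {n : nat}.
Implicit Types z : 'rV[R]_n.

Let geR := fun a b : R => b <= a.
Let lst z := sort geR [seq `|z 0 i| | i <- enum 'I_n].

Lemma lst_count z (p : pred R) : count p (lst z) = #|[set j | p `|z 0 j|]|.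
Proof.
rewrite /lst (permP (permEl (perm_sort _ _))) count_map cardsE cardE.
rewrite /enum_mem size_filter -enumT.
rewrite count_filter; apply: eq_count => i /=.
by rewrite andbT.
Qed.

Lemma lst_size z : size (lst z) = n.
Proof. by rewrite /lst size_sort size_map size_enum_ord. Qed.

Lemma lst_sorted z : sorted geR (lst z).
Proof. by apply: sort_sorted => a b; rewrite /geR le_total. Qed.

Lemma lst_ge0 z x : x \in lst z -> 0 <= x.
Proof. by rewrite /lst mem_sort => /mapP[i _ ->]. Qed.

Lemma lst_nth z i j : (i <= j)%N -> (j < n)%N -> nth 0 (lst z) j <= nth 0 (lst z) i.
Proof.
move=> ij jn.
have tr : transitive geR by move=> a b c; rewrite /geR => h1 h2; apply: le_trans h2 h1.
have rf : reflexive geR by move=> a; rewrite /geR.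
have := @sorted_leq_nth _ geR tr rf 0 (lst z) (lst_sorted z) i j.
rewrite !inE lst_size; apply => //; exact: leq_ltn_trans jn.
Qed.

Lemma Ms_ge0 s z : 0 <= Ms s z.
Proof.
rewrite /Ms -/(lst z); case: (ltnP s.-1 (size (lst z))) => h.
  by apply: lst_ge0; apply: mem_nth.
by rewrite nth_default.
Qed.

Lemma Ms_count_ge s z (c : R) : (0 < s)%N -> (s <= #|[set j | (c <= `|z 0 j|)%R]|)%N -> c <= Ms s z.
Proof.
move=> s0 hc; rewrite /Ms -/(lst z).
have hsn : (s.-1 < n)%N.
  apply: (@leq_trans s); first by rewrite prednK.
  apply: leq_trans hc _; rewrite -lst_count -[X in (_ <= X)%N](lst_size z); exact: count_size.
rewrite leNgt; apply/negP => hlt.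
move: hc; rewrite -(lst_count z (fun x => c <= x)).
rewrite -(cat_take_drop s.-1 (lst z)) count_cat.
have -> : count (fun x => c <= x) (drop s.-1 (lst z)) = 0%N.
  apply/eqP; rewrite -leqn0 leqNgt -has_count; apply/hasP => -[x].
  move=> /(nthP 0) [k]; rewrite size_drop lst_size nth_drop => hk <-.
  apply/negP; rewrite -ltNge; apply: le_lt_trans hlt.
  apply: lst_nth; first exact: leq_addr.
  by rewrite -ltn_subRL.
rewrite addn0 => h; have := leq_trans h (count_size _ _).
rewrite size_take lst_size hsn.
by case: (s) s0 => //= k _; rewrite ltnn.
Qed.

Lemma Ms_pos_count s z : (0 < s)%N -> 0 < Ms s z -> (s <= #|[set j | (Ms s z <= `|z 0 j|)%R]|)%N.
Proof.
move=> s0 hp; rewrite -(lst_count z (fun x => Ms s z <= x)).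
move: hp; rewrite /Ms -/(lst z) => hp.
have hsn : (s.-1 < n)%N.
  rewrite ltnNge; apply/negP => h; move: hp; rewrite nth_default ?ltxx //.
  by rewrite lst_size.
set m := nth 0 (lst z) s.-1.
rewrite -(cat_take_drop s (lst z)) count_cat.
apply: leq_trans (leq_addr _ _).
have -> : count (fun x => m <= x) (take s (lst z)) = size (take s (lst z)).
  apply/eqP; rewrite -all_count; apply/(all_nthP 0) => k.
  rewrite size_take lst_size.
  move=> hk; have hks : (k < s)%N.
    move: hk; case: ifP => // /negbT; rewrite -leqNgt => hns hk; exact: leq_trans hk hns.
  rewrite nth_take //; apply: lst_nth => //; by rewrite -ltnS prednK.
rewrite size_take lst_size; case: ifP => // _; by rewrite -(prednK s0).
Qed.
End Ms.

Section Vec.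
Context {R : realType} {n : nat}.
Implicit Types w z : 'rV[R]_n.

Definition upd w (i : 'I_n) (c : R) : 'rV[R]_n := \row_k (if k == i then c else w 0 k).
Definition supp w : {set 'I_n} := [set k | w 0 k != 0].

Lemma l0supp w : l0norm w = #|supp w|.
Proof. rewrite /l0norm /supp; apply: eq_card => k; rewrite !inE.
by apply/idP/idP; rewrite in_setE /= ?asboolE.
Qed.

Lemma upd_sq w z i c : sqnorm (upd w i c - z) =
  sqnorm (w - z) - (w 0 i - z 0 i) ^+ 2 + (c - z 0 i) ^+ 2.
Proof.
rewrite /sqnorm (bigD1 i) //= [in RHS](bigD1 i) //=.
have -> : \sum_(j | j != i) ((upd w i c - z) 0 j) ^+ 2 =
          \sum_(j | j != i) ((w - z) 0 j) ^+ 2.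
  apply: eq_bigr => j /negbTE hj. rewrite /upd !mxE. rewrite hj. done.
rewrite /upd !mxE eqxx; ring.
Qed.

Lemma supp_upd w i c : supp (upd w i c) \subset i |: supp w.
Proof.
apply/fintype.subsetP => k; rewrite !inE /upd mxE; case: (k =P i) => //=.
Qed.

Lemma supp_upd0 w j : supp (upd w j 0) \subset supp w :\ j.
Proof.
apply/fintype.subsetP => k; rewrite !inE /upd mxE; case: (k =P j) => //=.
by rewrite eqxx.
Qed.

Lemma sum_compl (A : {set 'I_n}) (a : 'I_n -> R) :
  \sum_i a i = \sum_(i in A) a i + \sum_(i in ~: A) a i.
Proof.
rewrite (bigID (mem A)) /=; congr (_ + _); apply: eq_bigl => i; by rewrite ?inE.
Qed.

Lemma key (S S1 : {set 'I_n}) (a : 'I_n -> R) c : 0 <= c ->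
  (#|S| <= #|S1|)%N -> (forall i, i \notin S1 -> a i <= c) ->
  (forall i, i \in S1 -> c <= a i) ->
  \sum_(i in S) a i <= \sum_(i in S1) a i.
Proof.
move=> c0 hc h0 h1.
rewrite (big_setID S1) [X in _ <= X](big_setID S) /= finset.setIC lerD2l.
apply: (@le_trans _ _ (c *+ #|S :\: S1|)).
  rewrite -sumr_const; apply: ler_sum => i; rewrite inE => /andP[hi _]; exact: h0.
apply: (@le_trans _ _ (c *+ #|S1 :\: S|)); last first.
  rewrite -sumr_const; apply: ler_sum => i; rewrite inE => /andP[_ hi]; exact: h1.
have hcard : (#|S :\: S1| <= #|S1 :\: S|)%N.
  move: hc; rewrite -[X in (X <= _)%N](cardsID S1 S) -[X in (_ <= X)%N](cardsID S S1).
  by rewrite finset.setIC leq_add2l.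
exact: ler_wpMn2l.
Qed.
End Vec.

Section Misc.
Context {R : realType}.
Lemma sq_abs (a b : R) : (a ^+ 2 <= b ^+ 2) = (`|a| <= `|b|).
Proof.
rewrite -[a ^+ 2]real_normK ?num_real // -[b ^+ 2]real_normK ?num_real //.
by rewrite ler_sqr // nnegrE normr_ge0.
Qed.

Lemma updE n (w : 'rV[R]_n) i c k : upd w i c 0 k = if k == i then c else w 0 k.
Proof. by rewrite /upd mxE. Qed.
Lemma subE n (a b : 'rV[R]_n) i : (a - b) 0 i = a 0 i - b 0 i.
Proof. by rewrite !mxE. Qed.
End Misc.

Local Open Scope classical_set_scope.

Theorem lemma4p2 (R : realType) (n : nat) (f : 'rV[R]_n -> R) (s : nat)
  (D : 'M[R]_n) :
  (forall x, differentiable f x) ->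
  (forall i : 'I_n, continuous (fun x => 'D_(@unitv R n i) f x)) ->
  (0 < s)%N ->
  is_diag_mx D -> posdef D ->
  forall x : 'rV[R]_n, Cs s x ->
  (D_stationary f D s x <->
   forall i : 'I_n,
     (x 0 i != 0 -> `|grad f x 0 i| = 0) /\
     (x 0 i = 0 -> `|grad f x 0 i| <= Num.sqrt (D i i) * Ms s (x *m sqrtD D))).
Proof.
move=> _ _ s0 Ddiag Dpd x Csx.
have dpos : forall i, 0 < D i i.
  move=> i.
  have hne : delta_mx 0 i != 0 :> 'rV[R]_n.
    apply/eqP => /matrixP /(_ 0 i); rewrite !mxE !eqxx /= => /eqP.
    by rewrite oner_eq0.
  have := Dpd _ hne; rewrite -rowE trmx_delta !mxE (bigD1 i) //= big1.
    by rewrite !mxE !eqxx mulr1 addr0.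
  by move=> k /negbTE hk; rewrite !mxE hk eqxx /= mulr0.
have rpos : forall i, 0 < Num.sqrt (D i i) by move=> i; rewrite sqrtr_gt0.
have rne : forall i, Num.sqrt (D i i) != 0 by move=> i; rewrite gt_eqF.
set w := x *m sqrtD D.
have wE : forall i, w 0 i = x 0 i * Num.sqrt (D i i).
  by move=> i; rewrite /w /sqrtD mul_mx_diag !mxE.
set g := grad f x.
set z := w - g *m invsqrtD D.
have zE : forall i, z 0 i = x 0 i * Num.sqrt (D i i) - g 0 i / Num.sqrt (D i i).
  by move=> i; rewrite -wE /z /invsqrtD mul_mx_diag !mxE.
have suppE : supp w = supp x.
  apply/setP => k; rewrite !inE wE mulf_eq0 negb_or rne andbT //.
have Csx' : (#|supp x| <= s)%N by rewrite -l0supp; exact: Csx.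
have Cw : (#|supp w| <= s)%N by rewrite suppE.
have stat : D_stationary f D s x <-> projCs s z w.
  split.
  - case=> _ [y hy hx].
    suff -> : w = y by [].
    apply/rowP => i; rewrite wE hx /invsqrtD mul_mx_diag !mxE divfK //.
  - move=> hw; split => //; exists w => //.
    by apply/rowP => i; rewrite /w /invsqrtD /sqrtD !mul_mx_diag !mxE mulfK.
rewrite stat; clear stat.
set m := Ms s w.
have m0 : 0 <= m := Ms_ge0 _ _.
have gz : forall i, x 0 i = 0 -> g 0 i = - (z 0 i * Num.sqrt (D i i)).
  by move=> i hi; rewrite zE hi mul0r sub0r mulNr opprK divfK.
have zw : forall i, g 0 i = 0 -> z 0 i = w 0 i.
  by move=> i hi; rewrite zE wE hi mul0r subr0.
have CsE : forall y : 'rV[R]_n, (#|supp y| <= s)%N -> Cs s y.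
  by move=> y hy; change (l0norm y <= s)%N; rewrite l0supp.
have CsE2 : forall y : 'rV[R]_n, Cs s y -> (#|supp y| <= s)%N.
  by move=> y hy; rewrite -l0supp; exact: hy.
split.
- case=> _ hmin.
  have partA : forall i, x 0 i != 0 -> g 0 i = 0.
    move=> i hi; have hiS : i \in supp w by rewrite suppE inE.
    have hC : Cs s (upd w i (z 0 i)).
      apply: CsE; apply: leq_trans (subset_leq_card (supp_upd _ _ _)) _.
      by rewrite cardsU1 hiS add0n.
    have := hmin _ hC.
    rewrite upd_sq subrr expr0n /= addr0 => h.
    have hsq : (w 0 i - z 0 i) ^+ 2 <= 0 by lra.
    have : (w 0 i - z 0 i) ^+ 2 == 0 by rewrite eq_le hsq sqr_ge0.
    rewrite zE wE expf_eq0 /=.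
    have -> : x 0 i * Num.sqrt (D i i) - (x 0 i * Num.sqrt (D i i) - g 0 i / Num.sqrt (D i i))
      = g 0 i / Num.sqrt (D i i) by ring.
    by rewrite mulf_eq0 invr_eq0 (negbTE (rne i)) orbF => /eqP.
  have partB : forall i, x 0 i = 0 -> `|z 0 i| <= m.
    move=> i hi; have wi0 : w 0 i = 0 by rewrite wE hi mul0r.
    case: (ltnP #|supp w| s) => hcard.
    + have hC : Cs s (upd w i (z 0 i)).
        apply: CsE; apply: leq_trans (subset_leq_card (supp_upd _ _ _)) _.
        rewrite cardsU1; apply: leq_trans (leq_add (leq_b1 _) (leqnn _)) _.
        by rewrite add1n.
      have := hmin _ hC.
      rewrite upd_sq subrr expr0n /= addr0 wi0 sub0r sqrrN => h.
      have hsq : z 0 i ^+ 2 <= 0 by lra.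
      have : z 0 i ^+ 2 == 0 by rewrite eq_le hsq sqr_ge0.
      by rewrite expf_eq0 /= => /eqP ->; rewrite normr0.
    + apply: Ms_count_ge => //; apply: leq_trans hcard _.
      apply: subset_leq_card; apply/fintype.subsetP => j; rewrite !inE => hj.
      have hij : j != i by apply/eqP => eji; move: hj; rewrite eji wi0 eqxx.
      have hxj : x 0 j != 0 by move: hj; rewrite wE mulf_eq0 negb_or => /andP[].
      have zwj := zw j (partA j hxj).
      have hjS : j \in supp w by rewrite inE.
      have hC : Cs s (upd (upd w j 0) i (z 0 i)).
        apply: CsE; apply: leq_trans (subset_leq_card (supp_upd _ _ _)) _.
        rewrite cardsU1; apply: leq_trans (leq_add (leq_b1 _) (subset_leq_card (supp_upd0 _ _))) _.
        by move: Cw; rewrite (cardsD1 j (supp w)) hjS.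
      have := hmin _ hC.
      rewrite !upd_sq updE eq_sym (negbTE hij) wi0 zwj subrr sub0r sqrrN subrr expr0n /= => h.
      by rewrite -sq_abs; move: h; rewrite sub0r sqrrN => h; lra.
  move=> i; split => hi.
    by rewrite partA // normr0.
  rewrite gz // normrN normrM (gtr0_norm (rpos i)) mulrC ler_wpM2l ?(ltW (rpos i)) //.
  exact: partB.
- move=> H; split.
    by apply: CsE.
  move=> y' /CsE2 Cy.
  have hz1 : forall i, i \in supp w -> z 0 i = w 0 i.
    move=> i; rewrite suppE inE => hi; apply: zw.
    by apply/eqP; rewrite -normr_eq0 (H i).1.
  have hz0 : forall i, i \notin supp w -> `|z 0 i| <= m /\ w 0 i = 0.
    move=> i; rewrite suppE inE negbK => /eqP hi; split; last by rewrite wE hi mul0r.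
    have := (H i).2 hi; rewrite gz // normrN normrM (gtr0_norm (rpos i)) mulrC.
    by rewrite ler_pM2l.
  have costw : sqnorm (w - z) = \sum_(i in ~: supp w) z 0 i ^+ 2.
    rewrite /sqnorm (sum_compl (supp w)) big1 ?add0r => [|i hi]; last first.
      by rewrite subE hz1 // subrr expr0n.
    apply: eq_bigr => i; rewrite inE => hi.
    by rewrite subE (hz0 i hi).2 sub0r sqrrN.
  have costy : \sum_(i in ~: supp y') z 0 i ^+ 2 <= sqnorm (y' - z).
    rewrite /sqnorm (sum_compl (supp y')).
    have -> : \sum_(i in ~: supp y') ((y' - z) 0 i) ^+ 2 = \sum_(i in ~: supp y') z 0 i ^+ 2.
      apply: eq_bigr => i; rewrite !inE negbK => /eqP hi.
      by rewrite subE hi sub0r sqrrN.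
    by apply: ler_wpDl; [apply: sumr_ge0 => i _; exact: sqr_ge0 | exact: lexx].
  rewrite costw; apply: le_trans costy.
  case: (leP m 0) => hm.
    rewrite big1 => [|i]; last first.
      rewrite inE => /hz0 [hzi _].
      have : `|z 0 i| <= 0 by apply: le_trans hzi hm.
      by rewrite normr_le0 => /eqP ->; rewrite expr0n.
    by apply: sumr_ge0 => i _; exact: sqr_ge0.
  have tot : forall A : {set 'I_n}, \sum_(i in ~: A) z 0 i ^+ 2 =
      \sum_i z 0 i ^+ 2 - \sum_(i in A) z 0 i ^+ 2.
    by move=> A; rewrite (sum_compl A (fun i => z 0 i ^+ 2)) /=; ring.
  have hB := Ms_pos_count s w s0 hm.
  have hw1 : forall j, j \in supp w -> m <= `|w 0 j|.
    move=> j hj; rewrite leNgt; apply/negP => hlt.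
    move: Cw; rewrite (cardsD1 j (supp w)) hj => Cw'.
    have : (s <= #|supp w :\ j|)%N.
      apply: leq_trans hB _; apply: subset_leq_card; apply/fintype.subsetP => k.
      rewrite !inE => hk; apply/andP; split.
        by apply/eqP => ekj; move: hk; rewrite ekj leNgt hlt.
      by rewrite -normr_gt0; apply: lt_le_trans hk.
    by move=> h; move: (leq_ltn_trans h Cw'); rewrite ltnn.
  have hcard : (#|supp y'| <= #|supp w|)%N.
    apply: leq_trans Cy _; apply: leq_trans hB _; apply: subset_leq_card.
    apply/fintype.subsetP => k; rewrite !inE => hk.
    by rewrite -normr_gt0; apply: lt_le_trans hk.
  rewrite !tot lerD2l lerN2.
  apply: (@key _ _ _ _ _ (m ^+ 2)) => //.
  - exact: sqr_ge0.
  - move=> i hi; rewrite sq_abs (ger0_norm (ltW hm)); exact: (hz0 i hi).1.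
  - move=> i hi; rewrite sq_abs (ger0_norm (ltW hm)) hz1 //; exact: hw1.
Qed.
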